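(* Let $(f_n)_{n\ge 1}$ be a sequence of $\{0,1\}$-valued functions on a set $X$. Then the following are equivalent: (i) there are a natural number $N$ and a set $E\subseteq\{1,\ldots,N\}$ such that for all $i_1<\cdots<i_N<\omega$, $$\bigcap_{j\in E}f_{i_j}^{-1}(1)\cap\bigcap_{j\in\{1,\ldots,N\}\setminus E}f_{i_j}^{-1}(0)=\emptyset;$$ (ii) there is a natural number $M$ such that $\sum_{n=1}^\infty|f_n(x)-f_{n+1}(x)|\le M$ for all $x\in X$. Moreover, if $X$ is a compact metric space and each $f_n$ is continuous, then (ii) (equivalently (i)) implies that $(f_n)$ converges pointwise to a function $f$ which is a difference of bounded semi-continuous functions.
   Context: A real-valued function $F$ on a topological space $X$ is upper (resp. lower) semi-continuous if $\{x:F(x)\ge r\}$ (resp. $\{x:F(x)\le r\}$) is closed for every real $r$; it is semi-continuous if it is upper or lower semi-continuous. A function $f$ is a difference of bounded semi-continuous functions (DBSC) if $f=F_1-F_2$ for some bounded semi-continuous functions $F_1,F_2$ on $X$. *)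

(* Defs.v *)
From HB Require Import structures.
From mathcomp Require Import all_boot all_order all_algebra.
From mathcomp Require Import all_classical all_reals all_analysis.
Set Implicit Arguments. Unset Strict Implicit. Unset Printing Implicit Defensive.
Import Order.TTheory GRing.Theory Num.Theory.
Import numFieldNormedType.Exports.
Local Open Scope classical_set_scope.
Local Open Scope ring_scope.

Definition usc_fun (R : realType) (X : topologicalType) (F : X -> R) : Prop :=
  forall r : R, closed [set x | r <= F x].
Definition lsc_fun (R : realType) (X : topologicalType) (F : X -> R) : Prop :=
  forall r : R, closed [set x | F x <= r].
Definition semicont_fun (R : realType) (X : topologicalType) (F : X -> R) : Prop :=
  usc_fun F \/ lsc_fun F.
Definition bounded_rfun (R : realType) (X : Type) (F : X -> R) : Prop :=
  exists M : R, forall x, `|F x| <= M.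

Definition DBSC (R : realType) (X : topologicalType) (f : X -> R) : Prop :=
  exists F1 F2 : X -> R,
    [/\ bounded_rfun F1, semicont_fun F1, bounded_rfun F2, semicont_fun F2
      & forall x, f x = F1 x - F2 x].

(* Sequence of {0,1}-valued functions (indexed from 0 instead of 1). *)
Definition zero_one_seq (R : realType) (X : Type) (f : nat -> X -> R) : Prop :=
  forall n x, f n x = 0 \/ f n x = 1.

(* Condition (i); {1,...,N} is rendered as 'I_N = {0,...,N-1}. *)
Definition cond_i (R : realType) (X : Type) (f : nat -> X -> R) : Prop :=
  exists (N : nat) (E : {set 'I_N}),
    forall i : 'I_N -> nat,
      (forall j k : 'I_N, (j < k)%N -> (i j < i k)%N) ->
      \bigcap_(j in [set j | j \in E]) (f (i j) @^-1` [set 1])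
        `&` \bigcap_(j in [set j | j \notin E]) (f (i j) @^-1` [set 0]) = set0.

Definition cond_ii (R : realType) (X : Type) (f : nat -> X -> R) : Prop :=
  exists M : nat, forall x : X,
    (\sum_(0 <= n <oo) (`|f n x - f n.+1 x|)%:E <= (M%:R)%:E)%E.

(* Main.v *)
Require Import Defs.
From HB Require Import structures.
From mathcomp Require Import all_boot all_order all_algebra.
From mathcomp Require Import all_classical all_reals all_analysis.
From mathcomp Require Import zify ring lra.
Import Order.TTheory GRing.Theory Num.Theory.
Import numFieldNormedType.Exports.
Section Comb.
Local Open Scope nat_scope.
Variable u : nat -> bool.
Definition sw a b := \sum_(a <= n < b) (u n != u n.+1 : nat).

Lemma sw_cat a b c : a <= b -> b <= c -> sw a c = sw a b + sw b c.
Proof. by move=> h1 h2; rewrite /sw (big_cat_nat h1 h2). Qed.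

Lemma sw_recr a b : a <= b -> sw a b.+1 = sw a b + (u b != u b.+1).
Proof. by move=> h; rewrite /sw big_nat_recr. Qed.

Lemma sw_recl a b : a < b -> sw a b = (u a != u a.+1) + sw a.+1 b.
Proof. by move=> h; rewrite /sw big_ltn. Qed.

Lemma sw_geq a b : b <= a -> sw a b = 0.
Proof. by move=> h; rewrite /sw big_geq. Qed.

Lemma sw_ge1 a b : a <= b -> u a != u b -> 1 <= sw a b.
Proof.
elim: b => [|b IH] hab hu.
  by move: hab; rewrite leqn0 => /eqP e; subst a; rewrite eqxx in hu.
move: hab; rewrite leq_eqVlt => /orP[/eqP e|hab].
  by subst a; rewrite eqxx in hu.
rewrite sw_recr //.
case e: (u a == u b).
  by move/eqP: e => e; rewrite -e hu addn1.
by rewrite (leq_trans (IH hab _)) ?leq_addr // e.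
Qed.

Lemma sw_chain L (ii : nat -> nat) :
  (forall j, j.+1 < L -> ii j < ii j.+1) ->
  (forall j, j.+1 < L -> u (ii j) != u (ii j.+1)) ->
  forall m, m < L -> m <= sw 0 (ii m).
Proof.
move=> hinc hdif; elim=> [|m IH] hm //.
have h1 := IH (ltnW hm).
rewrite (@sw_cat 0 (ii m)) //; last exact: ltnW (hinc m hm).
have h2 := @sw_ge1 _ _ (ltnW (hinc m hm)) (hdif m hm).
by have := leq_add h1 h2; rewrite addn1.
Qed.

Lemma find_bit v : forall k a b, b - a = k -> u a != v -> 1 <= sw a b ->
  exists c, a <= c /\ u c = v /\ sw a b <= (sw c b).+1.
Proof.
elim=> [|k IH] a b hk hv hs.
  by move: hs; rewrite sw_geq // -subn_eq0 hk.
have hab : a < b by rewrite -subn_gt0 hk.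
case h: (u a.+1 == v).
  exists a.+1; split; first exact: leqnSn.
  split; first exact/eqP.
  by rewrite (@sw_recl _ _ hab); have := leq_b1 (u a != u a.+1); lia.
have e : u a = u a.+1 by clear IH; move: hv h; case: (u a); case: (u a.+1); case: v.
have hs' : sw a b = sw a.+1 b by rewrite (@sw_recl _ _ hab) e eqxx.
have [c [hc1 [hc2 hc3]]] := IH a.+1 b ltac:(lia) ltac:(by rewrite h) ltac:(by rewrite -hs').
exists c; split; first exact: ltnW.
by rewrite hs'.
Qed.

Lemma embed : forall L a b (p : nat -> bool), 2 * L <= sw a b ->
  exists i : nat -> nat, (forall j, j < L -> a <= i j) /\
    (forall j, j.+1 < L -> i j < i j.+1) /\ (forall j, j < L -> u (i j) = p j).
Proof.
elim=> [|L IH] a b p hs.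
  by exists id; split; [|split].
have [c [hc1 [hc2 hc3]]] : exists c, a <= c /\ u c = p 0 /\ sw a b <= (sw c b).+1.
  case h: (u a == p 0).
    by exists a; split=> //; split; [exact/eqP|].
  apply: (find_bit (p 0) (b - a)) => //; first by rewrite h.
  by apply: leq_trans hs; rewrite muln_gt0.
have hcb : c < b.
  rewrite ltnNge; apply/negP => hbc.
  by move: hc3 hs; rewrite (@sw_geq c b hbc); lia.
have hs' : 2 * L <= sw c.+1 b.
  move: hc3; rewrite (@sw_recl _ _ hcb) => h.
  have := leq_b1 (u c != u c.+1). move: hs h. rewrite mulnS. lia.
have [i [hi1 [hi2 hi3]]] := IH c.+1 b (fun j => p j.+1) hs'.
exists (fun j => if j is j'.+1 then i j' else c); split; last split.
- by case=> [|j] hj //; apply: leq_trans hc1 (ltnW (hi1 j hj)).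
- case=> [|j] hj; first exact: hi1.
  exact: hi2.
- by case=> [|j] hj //; apply: hi3.
Qed.

Lemma chain_mono (i : nat -> nat) L : (forall j, j.+1 < L -> i j < i j.+1) ->
  forall j k, j < k -> k < L -> i j < i k.
Proof.
move=> h j; elim=> [|k IH] // hjk hk.
move: hjk; rewrite ltnS leq_eqVlt => /orP[/eqP->|hjk]; first exact: h.
by apply: ltn_trans (IH hjk (ltnW hk)) (h k hk).
Qed.
End Comb.
Local Open Scope classical_set_scope.
Local Open Scope ring_scope.
Section Bridge.
Variables (R : realType) (X : Type) (f : nat -> X -> R).
Hypothesis f01 : zero_one_seq f.
Variable x : X.
Let u n := f n x == 1.

Lemma fE n : f n x = (u n)%:R.
Proof. by rewrite /u; case: (f01 n x) => ->; rewrite ?eqxx // (eq_sym 0) oner_eq0. Qed.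

Lemma absE n : `|f n x - f n.+1 x| = (u n != u n.+1)%:R.
Proof.
rewrite !fE; case: (u n); case: (u n.+1) => /=;
by rewrite ?subr0 ?sub0r ?normrN ?normr1 ?subrr ?normr0.
Qed.

Lemma sumE k : \sum_(0 <= n < k) `|f n x - f n.+1 x| = (sw u 0 k)%:R.
Proof. by rewrite /sw natr_sum; apply: eq_bigr => n _; exact: absE. Qed.
End Bridge.
Arguments fE {R X f} f01 x n.
Arguments absE {R X f} f01 x n.
Arguments sumE {R X f} f01 x k.

Lemma partial_le (R : realType) (X : Type) (f : nat -> X -> R) (M : nat) x k :
  (\sum_(0 <= n <oo) (`|f n x - f n.+1 x|)%:E <= (M%:R)%:E)%E ->
  \sum_(0 <= n < k) `|f n x - f n.+1 x| <= M%:R.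
Proof.
move=> h; rewrite -lee_fin -sumEFin; apply: le_trans h.
by apply: nneseries_lim_ge => n _ _; rewrite lee_fin.
Qed.

Lemma part1 (R : realType) (X : Type) (f : nat -> X -> R) :
  zero_one_seq f -> (cond_i f <-> cond_ii f).
Proof.
move=> f01; split.
- move=> [N [E HE]]; exists (2 * N)%N => x.
  set u := fun n => f n x == 1.
  apply: lime_le; first by apply: is_cvg_nneseries => n _ _; rewrite lee_fin.
  apply: nearW => k; rewrite sumEFin lee_fin (sumE f01) ler_nat.
  rewrite leqNgt; apply/negP => hk.
  have [i [_ [hi2 hi3]]] := @embed u N 0 k (fun j => [exists j' : 'I_N, (val j' == j) && (j' \in E)]) (ltnW hk).
  have hmono := @chain_mono _ _ hi2.
  have pE (j : 'I_N) : [exists j' : 'I_N, (val j' == val j) && (j' \in E)] = (j \in E).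
    apply/existsP/idP => [[j' /andP[/eqP/val_inj -> ]]|hj] //.
    by exists j; rewrite eqxx hj.
  have := HE (fun j => i j) (fun j k hjk => hmono j k hjk (ltn_ord k)).
  apply/eqP/set0P; exists x; split => j /= hj.
  + rewrite (fE f01) -/(u _) hi3 // pE.
    by rewrite hj.
  + rewrite (fE f01) -/(u _) hi3 // pE.
    by rewrite (negbTE hj).
- move=> [M HM]; exists M.+2, (finset (fun j : 'I_M.+2 => odd j)) => i hi.
  apply/seteqP; split => // x [H1 H0].
  set u := fun n => f n x == 1.
  pose ii n := i (inord n).
  have hu n : (n < M.+2)%N -> u (ii n) = odd n.
    move=> hn; rewrite /u /ii; case ho: (odd n).
    + by rewrite H1 ?eqxx //= inE inordK.
    + by rewrite H0 ?(eq_sym 0) ?oner_eq0 //= inE inordK // ho.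
  have hinc j : (j.+1 < M.+2)%N -> (ii j < ii j.+1)%N.
    move=> hj; apply: hi; rewrite !inordK //; exact: ltnW.
  have hdif j : (j.+1 < M.+2)%N -> u (ii j) != u (ii j.+1).
    move=> hj; rewrite !hu //; last exact: ltnW.
    by rewrite oddS; case: (odd j).
  have := @sw_chain u M.+2 ii hinc hdif M.+1 (leqnn _).
  have := @partial_le _ _ f M x (ii M.+1) (HM x).
  rewrite (sumE f01) ler_nat => h1 h2.
  by move: (leq_trans h2 h1); rewrite ltnn.
Qed.
Lemma lsc_lim (R : realType) (X : topologicalType) (h : nat -> X -> R) (B : R) :
  (forall k, continuous (h k)) ->
  (forall x, {homo (fun k => h k x) : n m / (n <= m)%N >-> n <= m}) ->
  (forall k x, 0 <= h k x <= B) ->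
  (forall x, (fun k => h k x) @ \oo --> limn (fun k => h k x)) /\
  bounded_rfun (fun x => limn (fun k => h k x)) /\
  lsc_fun (fun x => limn (fun k => h k x)).
Proof.
move=> hc hm hb.
have cv x : cvgn (fun k => h k x).
  apply: nondecreasing_is_cvgn; first exact: hm.
  by exists B => _ [k _ <-]; case/andP: (hb k x).
have le x k : h k x <= limn (fun k => h k x).
  exact: nondecreasing_cvgn_le (hm x) (cv x) k.
have ge x r : (forall k, h k x <= r) -> limn (fun k => h k x) <= r.
  by move=> H; apply: limr_le; [exact: cv|apply: nearW].
split; first exact: cv.
split.
  exists B => x; rewrite ger0_norm.
    by apply: ge => k; case/andP: (hb k x).
  by apply: le_trans (le x 0%N); case/andP: (hb 0%N x).
move=> r.
have -> : [set x | limn (fun k => h k x) <= r] =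
          \bigcap_(k in setT) (h k @^-1` [set y | y <= r]).
  apply/seteqP; split => x /=.
    by move=> H k _; apply: le_trans (le x k) H.
  by move=> H; apply: ge => k; exact: H.
apply: closed_bigI => k _.
by move: (hc k) => /continuous_closedP; apply; exact: closed_le.
Qed.
Lemma part2 (R : realType) :
  (forall (X : pseudoMetricType R) (f : nat -> X -> R),
      hausdorff_space X -> compact [set: X] ->
      zero_one_seq f -> (forall n, continuous (f n)) ->
      cond_ii f ->
      exists g : X -> R,
        (forall x, (fun n => f n x) @ \oo --> g x) /\ DBSC g).
Proof.
move=> X f _ _ f01 hc [M HM].
pose t1 n x := f n.+1 x * (1 - f n x).
pose t2 n x := f n x * (1 - f n.+1 x).
pose h1 k x := f 0%N x + \sum_(0 <= n < k) t1 n x.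
pose h2 k x := \sum_(0 <= n < k) t2 n x.
have tP n x : [/\ 0 <= t1 n x, 0 <= t2 n x & t1 n x + t2 n x = `|f n x - f n.+1 x|].
  rewrite /t1 /t2; case: (f01 n x) => ->; case: (f01 n.+1 x) => ->;
  split; rewrite ?subr0 ?sub0r ?subrr ?normrN ?normr1 ?normr0 ?mulr0 ?mul0r ?mulr1 ?addr0 ?add0r //.
have f0P x : 0 <= f 0%N x <= 1.
  by case: (f01 0%N x) => ->; rewrite ?lexx ?ler01.
have idE k x : f k x = h1 k x - h2 k x.
  elim: k => [|k IH]; first by rewrite /h1 /h2 !big_geq // addr0 subr0.
  rewrite /h1 /h2 !big_nat_recr //= -/(h2 k x).
  move: IH; rewrite /h1 /t1 /t2 => IH.
  rewrite -/(h2 k x) in IH *. rewrite -/(h2 k x).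
  set S := \sum_(0 <= i < k) _ in IH *.
  rewrite IH; ring.
have Sle k x : \sum_(0 <= n < k) (t1 n x + t2 n x) <= M%:R.
  rewrite (eq_bigr (fun n => `|f n x - f n.+1 x|)); last by move=> n _; case: (tP n x).
  exact: partial_le (HM x).
have cS (t : nat -> X -> R) : (forall n, continuous (t n)) ->
    forall k, continuous (fun x => \sum_(0 <= n < k) t n x).
  move=> ct; elim=> [|k IH].
    by under eq_fun do rewrite big_geq //; exact: cst_continuous.
  under eq_fun do rewrite big_nat_recr //=.
  by move=> x; apply: continuousD; [exact: IH|exact: ct].
have ct1 n : continuous (t1 n).
  move=> x; apply: (@continuousM _ _ (f n.+1) (fun x => 1 - f n x)); first exact: hc.
  by apply: continuousB; [exact: cst_continuous|exact: hc].
have ct2 n : continuous (t2 n).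
  move=> x; apply: (@continuousM _ _ (f n) (fun x => 1 - f n.+1 x)); first exact: hc.
  by apply: continuousB; [exact: cst_continuous|exact: hc].
have mono (t : nat -> X -> R) x : (forall n, 0 <= t n x) ->
    {homo (fun k => \sum_(0 <= n < k) t n x) : n m / (n <= m)%N >-> n <= m}.
  move=> t0 n m nm; rewrite (big_cat_nat (leq0n n) nm) /= lerDl.
  by apply: sumr_ge0 => i _.
have sum0 (t : nat -> X -> R) x k : (forall n, 0 <= t n x) -> 0 <= \sum_(0 <= n < k) t n x.
  by move=> t0; apply: sumr_ge0 => i _.
have hA : forall k, continuous (h1 k).
  move=> k x; apply: continuousD; [exact: hc|exact: cS].
have hB : forall x, {homo (fun k => h1 k x) : n m / (n <= m)%N >-> n <= m}.
  move=> x n m nm; rewrite /h1 lerD2l; apply: mono nm => i; by case: (tP i x).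
have hC : forall k x, 0 <= h1 k x <= 1 + M%:R.
  move=> k x; case/andP: (f0P x) => f0 f1; apply/andP; split.
    by rewrite addr_ge0 // sum0 // => i; case: (tP i x).
  apply: lerD f1 _; apply: le_trans (Sle k x); apply: ler_sum => i _.
  by case: (tP i x) => _ ? _; rewrite lerDl.
have [cv1 [b1 l1]] := @lsc_lim R X h1 (1 + M%:R) hA hB hC.
have hA2 : forall k, continuous (h2 k) by move=> k; apply: cS.
have hB2 : forall x, {homo (fun k => h2 k x) : n m / (n <= m)%N >-> n <= m}.
  move=> x n m nm; apply: mono nm => i; by case: (tP i x).
have hC2 : forall k x, 0 <= h2 k x <= 1 + M%:R.
  move=> k x; apply/andP; split.
    by rewrite sum0 // => i; case: (tP i x).
  apply: (@le_trans _ _ (\sum_(0 <= n < k) (t1 n x + t2 n x))).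
    apply: ler_sum => i _.
    by case: (tP i x) => ? _ _; rewrite lerDr.
  by apply: le_trans; first exact: Sle k x; rewrite lerDr.
have [cv2 [b2 l2]] := @lsc_lim R X h2 (1 + M%:R) hA2 hB2 hC2.
exists (fun x => limn (fun k => h1 k x) - limn (fun k => h2 k x)); split.
  move=> x; have -> : (fun n => f n x) = (fun n => h1 n x - h2 n x).
    by apply: funext => n; exact: idE.
  exact: cvgB (cv1 x) (cv2 x).
exists (fun x => limn (fun k => h1 k x)), (fun x => limn (fun k => h2 k x)).
by split => //; right.
Qed.

Theorem lemma2p8 (R : realType) :
  (forall (X : Type) (f : nat -> X -> R),
      zero_one_seq f -> (cond_i f <-> cond_ii f)) /\
  (forall (X : pseudoMetricType R) (f : nat -> X -> R),
      hausdorff_space X -> compact [set: X] ->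
      zero_one_seq f -> (forall n, continuous (f n)) ->
      cond_ii f ->
      exists g : X -> R,
        (forall x, (fun n => f n x) @ \oo --> g x) /\ DBSC g).
Proof.
split; [exact: part1 | exact: part2].
Qed.
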